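(* Let $A,B$ be real symmetric $n\times n$ matrices with spectral decompositions $A=\sum_i\lambda_iv_iv_i^\top$ and $B=\sum_j\mu_jw_jw_j^\top$, suppose $\|A\|\le2.5$, and let $\eta>0$. Then the matrix $X=\sum_{i,j}\frac{\eta}{(\lambda_i-\mu_j)^2+\eta^2}v_iv_i^\top\mathbf Jw_jw_j^\top$ satisfies $$X=\frac1{2\pi}\operatorname{Re}\oint_\Gamma R_A(z)\mathbf JR_B(z+\mathbf i\eta)\,dz,$$ where $\Gamma$ is the boundary of the rectangle with vertices $\pm3\pm\mathbf i\eta/2$, traversed counterclockwise.
   Context: $\mathbf J$ is the $n\times n$ all-ones matrix, $\|\cdot\|$ the spectral norm, $\mathbf i=\sqrt{-1}$. For a real symmetric matrix $M$ and $z\in\mathbb C$ not an eigenvalue of $M$, $R_M(z)=(M-z\mathbf I)^{-1}$ is the resolvent. The real part and the integral are taken entrywise. *)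

(* Defs.v *)
From HB Require Import structures.
From mathcomp Require Import all_boot all_order all_algebra.
From mathcomp Require Import all_classical all_reals all_analysis.
From mathcomp Require Import complex.

Set Implicit Arguments.
Unset Strict Implicit.
Unset Printing Implicit Defensive.

Import Order.TTheory GRing.Theory Num.Theory.
Local Open Scope ring_scope.
Local Open Scope classical_set_scope.

Section PilotDefs.
Variable R : realType.
Local Notation C := (R[i]).

Definition onesmx (n : nat) : 'M[R]_n := const_mx 1.

Definition vnorm2 (n : nat) (x : 'cV[R]_n) : R :=
  Num.sqrt (\sum_(k < n) x k 0 ^+ 2).

Definition spnorm (n : nat) (A : 'M[R]_n) : R :=
  sup [set vnorm2 (A *m x) | x in [set x : 'cV[R]_n | vnorm2 x = 1]].

Definition cmx (n : nat) (A : 'M[R]_n) : 'M[C]_n := map_mx (fun r => Complex r 0) A.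

Definition resolvent (n : nat) (M : 'M[R]_n) (z : C) : 'M[C]_n :=
  invmx (cmx M - z%:M).

Definition cintegral01 (f : R -> C) : C :=
  Complex (\int[@lebesgue_measure R]_(t in `[0, 1]) complex.Re (f t))
          (\int[@lebesgue_measure R]_(t in `[0, 1]) complex.Im (f t)).

Definition seg_integral (n : nat) (F : C -> 'M[C]_n) (a b : C) : 'M[C]_n :=
  \matrix_(i < n, j < n) cintegral01 (fun t => F (a + Complex t 0 * (b - a)) i j * (b - a)).

Definition rect_integral (n : nat) (F : C -> 'M[C]_n) (x0 y0 : R) : 'M[C]_n :=
  let v1 := Complex x0 (- y0) in
  let v2 := Complex x0 y0 in
  let v3 := Complex (- x0) y0 in
  let v4 := Complex (- x0) (- y0) in
  seg_integral F v1 v2 + seg_integral F v2 v3 +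
  seg_integral F v3 v4 + seg_integral F v4 v1.

End PilotDefs.

(* Main.v *)
From Pilot Require Import Defs.
From HB Require Import structures.
From mathcomp Require Import all_boot all_order all_algebra.
From mathcomp Require Import all_classical all_reals all_analysis.
From mathcomp Require Import complex.
From mathcomp Require Import ring lra.
Module M2.
Set Implicit Arguments.
Unset Strict Implicit.
Import Order.TTheory GRing.Theory Num.Theory.
Import numFieldNormedType.Exports.
Local Open Scope ring_scope.
Local Open Scope classical_set_scope.

Section S.
Variable R : realType.
Notation mu := (@lebesgue_measure R).
Implicit Types (t a b : R) (f g : R -> R).

Lemma D_ext f t a b : is_derive t 1 f a -> a = b -> is_derive t 1 f b.
Proof. by move=> ? <-. Qed.

Lemma D_cst t (c : R) : is_derive t 1 (fun _ : R => c) 0.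
Proof. exact: is_derive_cst. Qed.

Lemma D_id t : is_derive t 1 (fun s : R => s) 1.
Proof. exact: is_derive_id. Qed.

Lemma D_add f g t a b : is_derive t 1 f a -> is_derive t 1 g b ->
  is_derive t 1 (fun s => f s + g s) (a + b).
Proof.
move=> Hf Hg; have -> : (fun s => f s + g s) = f + g by apply/funext.
exact: is_deriveD.
Qed.

Lemma D_opp f t a : is_derive t 1 f a -> is_derive t 1 (fun s => - f s) (- a).
Proof.
move=> Hf; have -> : (fun s => - f s) = - f by apply/funext.
exact: is_deriveN.
Qed.

Lemma D_sub f g t a b : is_derive t 1 f a -> is_derive t 1 g b ->
  is_derive t 1 (fun s => f s - g s) (a - b).
Proof. by move=> Hf Hg; apply: D_add => //; apply: D_opp. Qed.

Lemma D_mul f g t a b : is_derive t 1 f a -> is_derive t 1 g b ->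
  is_derive t 1 (fun s => f s * g s) (f t * b + g t * a).
Proof.
move=> Hf Hg; have -> : (fun s => f s * g s) = f * g by apply/funext.
by apply: is_derive_eq.
Qed.

Lemma D_comp f g t a b : is_derive (g t) 1 f a -> is_derive t 1 g b ->
  is_derive t 1 (fun s => f (g s)) (a * b).
Proof.
move=> Hf Hg; have -> : (fun s => f (g s)) = f \o g by apply/funext.
exact: is_derive1_comp.
Qed.

Lemma D_inv f t a : f t != 0 -> is_derive t 1 f a ->
  is_derive t 1 (fun s => (f s)^-1) (- a / (f t) ^+ 2).
Proof.
move=> ft Hf; have H := is_deriveV ft Hf. apply: D_ext H _.
rewrite -[_ *: a]/(_ * a). by rewrite mulrC mulNr mulrN.
Qed.

Lemma D_sqr f t a : is_derive t 1 f a -> is_derive t 1 (fun s => (f s) ^+ 2) (2 * f t * a).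
Proof.
move=> Hf; have -> : (fun s => f s ^+ 2) = (fun s => f s * f s).
  by apply/funext => s; rewrite expr2.
have H := D_mul Hf Hf. apply: D_ext H _.
by rewrite /=; ring.
Qed.

Definition isD (G : R -> R) t a := derivable G t 1 /\ 'D_1 G t = a.

Lemma isDP (G : R -> R) t a : is_derive t 1 G a -> isD G t a.
Proof. by case. Qed.

Lemma ftc01 (f G : R -> R) :
  (forall t : R, 0 <= t <= 1 -> derivable f t 1) ->
  (forall t : R, 0 <= t <= 1 -> isD G t (f t)) ->
  \int[mu]_(t in `[0, 1]) f t = G 1 - G 0.
Proof.
move=> df dG.
have cf : {within `[0%R, 1%R], continuous f}.
  have := @derivable_within_continuous R R f (Interval (BLeft 0%R) (BRight 1%R)); apply => t.
  by rewrite in_itv /= => /df.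
have cG : forall t, 0 <= t <= 1 -> {for t, continuous G}.
  move=> t /dG [dGt _]; apply: differentiable_continuous.
  exact/derivable1_diffP.
rewrite /Rintegral (@continuous_FTC2 _ f G 0 1) //=.
- split.
  + move=> t; rewrite in_itv /= => /andP[t0 t1].
    by case: (dG t _) => //; rewrite !ltW.
  + by apply: cvg_at_right_filter; apply: cG; rewrite lexx ler01.
  + by apply: cvg_at_left_filter; apply: cG; rewrite lexx ler01.
- move=> t; rewrite in_itv /= => /andP[t0 t1].
  have := dG t; rewrite !ltW // => /(_ isT) [_ <-].
  by rewrite derive1E.
Qed.

Lemma D_aff t (x0 dx : R) : is_derive t 1 (fun s => x0 - s * dx) (- dx).
Proof.
have H := D_sub (D_cst t x0) (D_mul (D_id t) (D_cst t dx)).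
by apply: D_ext H _; ring.
Qed.

Definition Nf (x0 dx y0 dy t : R) := (x0 - t * dx) ^+ 2 + (y0 - t * dy) ^+ 2.
Definition fre (x0 dx y0 dy t : R) :=
  (dx * (x0 - t * dx) + dy * (y0 - t * dy)) / ((x0 - t * dx) ^+ 2 + (y0 - t * dy) ^+ 2).
Definition fim (x0 dx y0 dy t : R) :=
  (dy * (x0 - t * dx) - dx * (y0 - t * dy)) / ((x0 - t * dx) ^+ 2 + (y0 - t * dy) ^+ 2).

Lemma D_N t x0 dx y0 dy : is_derive t 1 (Nf x0 dx y0 dy)
   (- 2 * (dx * (x0 - t * dx) + dy * (y0 - t * dy))).
Proof.
have H := D_add (D_sqr (D_aff t x0 dx)) (D_sqr (D_aff t y0 dy)).
by apply: D_ext H _; ring.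
Qed.

Lemma derivable_fre t x0 dx y0 dy : Nf x0 dx y0 dy t != 0 ->
  derivable (fre x0 dx y0 dy) t 1.
Proof.
move=> N0; have [] // := (D_mul (D_add (D_mul (D_cst t dx) (D_aff t x0 dx)) (D_mul (D_cst t dy) (D_aff t y0 dy)))
         (D_inv N0 (D_N t x0 dx y0 dy))).
Qed.

Lemma derivable_fim t x0 dx y0 dy : Nf x0 dx y0 dy t != 0 ->
  derivable (fim x0 dx y0 dy) t 1.
Proof.
move=> N0; have [] // := (D_mul (D_sub (D_mul (D_cst t dy) (D_aff t x0 dx)) (D_mul (D_cst t dx) (D_aff t y0 dy)))
         (D_inv N0 (D_N t x0 dx y0 dy))).
Qed.

Lemma int_fre x0 dx y0 dy : (forall t : R, 0 <= t <= 1 -> 0 < Nf x0 dx y0 dy t) ->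
  \int[mu]_(t in `[0, 1]) fre x0 dx y0 dy t =
  (ln (Nf x0 dx y0 dy 0) - ln (Nf x0 dx y0 dy 1)) / 2.
Proof.
move=> Npos.
rewrite (@ftc01 (fre x0 dx y0 dy) (fun t => - ln (Nf x0 dx y0 dy t) / 2)).
- by field.
- by move=> t /Npos Nt; apply: derivable_fre; rewrite gt_eqF.
- move=> t /Npos Nt; apply: isDP.
have H := D_mul (D_opp (D_comp (is_derive1_ln Nt) (D_N t x0 dx y0 dy))) (D_cst t (2^-1)).
  apply: D_ext H _; rewrite /fre -/(Nf x0 dx y0 dy t).
  by field; rewrite gt_eqF.
Qed.

Lemma sqr_pos (y : R) : y != 0 -> 0 < y ^+ 2.
Proof. by move=> y0; rewrite lt_def sqrf_eq0 y0 sqr_ge0. Qed.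

Lemma sum_sqr_posr (x y : R) : y != 0 -> 0 < x ^+ 2 + y ^+ 2.
Proof. by move=> y0; apply: ltr_wpDl (sqr_ge0 x) (sqr_pos y0). Qed.

Lemma sum_sqr_posl (x y : R) : x != 0 -> 0 < x ^+ 2 + y ^+ 2.
Proof. by move=> x0; rewrite addrC; apply: sum_sqr_posr. Qed.

Lemma int_fim_Y x0 dx y0 dy : (forall t : R, 0 <= t <= 1 -> y0 - t * dy != 0) ->
  \int[mu]_(t in `[0, 1]) fim x0 dx y0 dy t =
  atan ((x0 - dx) / (y0 - dy)) - atan (x0 / y0).
Proof.
move=> Y0.
rewrite (@ftc01 (fim x0 dx y0 dy) (fun t => atan ((x0 - t * dx) / (y0 - t * dy)))).
- by rewrite !mul1r !mul0r !subr0.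
- by move=> t /Y0 Yt; apply: derivable_fim; rewrite gt_eqF // /Nf sum_sqr_posr.
- move=> t /Y0 Yt; apply: isDP.
  have H := D_comp (is_derive1_atan _) (D_mul (D_aff t x0 dx) (@D_inv (fun s => y0 - s * dy) _ _ Yt (D_aff t y0 dy))).
  apply: D_ext H _; rewrite /fim.
  have N0 := sum_sqr_posr (x0 - t * dx) Yt.
  by field; rewrite (gt_eqF N0) Yt.
Qed.

Lemma int_fim_X x0 dx y0 dy : (forall t : R, 0 <= t <= 1 -> x0 - t * dx != 0) ->
  \int[mu]_(t in `[0, 1]) fim x0 dx y0 dy t =
  - (atan ((y0 - dy) / (x0 - dx)) - atan (y0 / x0)).
Proof.
move=> X0.
rewrite (@ftc01 (fim x0 dx y0 dy) (fun t => - atan ((y0 - t * dy) / (x0 - t * dx)))).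
- by rewrite !mul1r !mul0r !subr0; ring.
- by move=> t /X0 Xt; apply: derivable_fim; rewrite gt_eqF // /Nf sum_sqr_posl.
- move=> t /X0 Xt; apply: isDP.
  have H := D_opp (D_comp (is_derive1_atan _) (D_mul (D_aff t y0 dy) (@D_inv (fun s => x0 - s * dx) _ _ Xt (D_aff t x0 dx)))).
  apply: D_ext H _; rewrite /fim.
  have N0 := sum_sqr_posl (y0 - t * dy) Xt.
  by field; rewrite (gt_eqF N0) Xt.
Qed.

Lemma atan_inv (x : R) : 0 < x -> atan x^-1 = pi / 2 - atan x.
Proof.
move=> x0.
have /andP[lo hi] : 0 < atan x < pi / 2.
  by rewrite atan_ltpi2 andbT -atan0 lt_atan.
have hc : 0 < cos (atan x) by apply: cos_gt0_pihalf; rewrite atan_ltpi2 andbT (lt_trans _ lo) // oppr_lt0 divr_gt0 // pi_gt0.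
have ht := atanK x; rewrite /tan in ht.
have hs : sin (atan x) = x * cos (atan x).
  by rewrite -{2}ht mulrVK // unitfE gt_eqF.
have sne : sin (atan x) != 0 by rewrite hs mulf_neq0 // gt_eqF.
have mem : pi / 2 - atan x \in (`](- (pi / 2)), (pi / 2)[%R : interval R).
  have := pi_gt0 R; rewrite in_itv /= => pi0; apply/andP; split; lra.
rewrite -[RHS](tanK mem); congr atan.
have -> : pi / 2 - atan x = - (atan x - pi / 2) by rewrite opprB.
rewrite /tan sinN cosN sinBpihalf cosBpihalf opprK hs.
by field; rewrite !gt_eqF.
Qed.

Lemma lam_total (l e : R) : -3 < l < 3 -> 0 < e ->
  - (atan ((- (e / 2)) / (l - 3)) - atan ((e / 2) / (l - 3)))
  + (atan ((l + 3) / (- (e / 2))) - atan ((l - 3) / (- (e / 2))))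
  + - (atan ((e / 2) / (l + 3)) - atan ((- (e / 2)) / (l + 3)))
  + (atan ((l - 3) / (e / 2)) - atan ((l + 3) / (e / 2))) = - (2 * pi).
Proof.
move=> /andP[l1 l2] e0.
have a0 : 0 < (e / 2) / (3 - l) by rewrite divr_gt0 ?divr_gt0 // subr_gt0.
have b0 : 0 < (e / 2) / (3 + l) by rewrite divr_gt0 ?divr_gt0 //; lra.
have h1 : 3 - l != 0 by apply/negP => /eqP; lra.
have h2 : 3 + l != 0 by apply/negP => /eqP; lra.
have h3 : l - 3 != 0 by apply/negP => /eqP; lra.
have h4 : l + 3 != 0 by apply/negP => /eqP; lra.
have h5 : e != 0 by rewrite gt_eqF.
set a := (e / 2) / (3 - l); set b := (e / 2) / (3 + l).
have -> : (- (e / 2)) / (l - 3) = a by rewrite /a; field; do ?[apply/andP; split]; apply/eqP => H; lra.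
have -> : (e / 2) / (l - 3) = - a by rewrite /a; field; do ?[apply/andP; split]; apply/eqP => H; lra.
have -> : (l + 3) / (- (e / 2)) = - b^-1 by rewrite /b; field; do ?[apply/andP; split]; apply/eqP => H; lra.
have -> : (l - 3) / (- (e / 2)) = a^-1 by rewrite /a; field; do ?[apply/andP; split]; apply/eqP => H; lra.
have -> : (e / 2) / (l + 3) = b by rewrite /b; field; do ?[apply/andP; split]; apply/eqP => H; lra.
have -> : (- (e / 2)) / (l + 3) = - b by rewrite /b; field; do ?[apply/andP; split]; apply/eqP => H; lra.
have -> : (l - 3) / (e / 2) = - a^-1 by rewrite /a; field; do ?[apply/andP; split]; apply/eqP => H; lra.
have -> : (l + 3) / (e / 2) = b^-1 by rewrite /b; field; do ?[apply/andP; split]; apply/eqP => H; lra.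
rewrite !atanN (atan_inv a0) (atan_inv b0).
rewrite /a /b; lra.
Qed.

Definition good (f : R -> R) := forall t : R, 0 <= t <= 1 -> derivable f t 1.

Lemma good_int f : good f -> mu.-integrable `[0, 1] (EFin \o f).
Proof.
move=> gf; apply: continuous_compact_integrable; first exact: segment_compact.
have := @derivable_within_continuous R R f (Interval (BLeft 0%R) (BRight 1%R)); apply => t.
by rewrite in_itv /= => /gf.
Qed.

Lemma goodD f g : good f -> good g -> good (fun t => f t + g t).
Proof.
move=> gf gg t /[dup] /gf /derivableP hf /gg /derivableP hg.
by have [] := D_add hf hg.
Qed.

Lemma goodZ k f : good f -> good (fun t => k * f t).
Proof.
move=> gf t /gf /derivableP hf.
by have [] := D_mul (D_cst t k) hf.
Qed.

Lemma goodB f g : good f -> good g -> good (fun t => f t - g t).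
Proof.
move=> gf gg t /[dup] /gf /derivableP hf /gg /derivableP hg.
by have [] := D_sub hf hg.
Qed.

Lemma good_sum (I : Type) (s : seq I) (F : I -> R -> R) :
  (forall i, good (F i)) -> good (fun t => \sum_(i <- s) F i t).
Proof.
move=> gF; elim: s => [|x s IH].
  move=> t _; have -> : (fun t => \sum_(i <- [::]) F i t) = (fun _ => 0 : R).
    by apply/funext => u; rewrite big_nil.
  by have [] := D_cst t (0 : R).
have -> : (fun t => \sum_(i <- x :: s) F i t) = (fun t => F x t + \sum_(i <- s) F i t).
  by apply/funext => u; rewrite big_cons.
exact: goodD.
Qed.

Lemma RintD f g : good f -> good g ->
  \int[mu]_(t in `[0, 1]) (f t + g t) = \int[mu]_(t in `[0, 1]) f t + \int[mu]_(t in `[0, 1]) g t.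
Proof. by move=> gf gg; apply: RintegralD => //; apply: good_int. Qed.

Lemma RintZ k f : good f ->
  \int[mu]_(t in `[0, 1]) (k * f t) = k * \int[mu]_(t in `[0, 1]) f t.
Proof. by move=> gf; apply: RintegralZl => //; apply: good_int. Qed.

Lemma RintB f g : good f -> good g ->
  \int[mu]_(t in `[0, 1]) (f t - g t) = \int[mu]_(t in `[0, 1]) f t - \int[mu]_(t in `[0, 1]) g t.
Proof.
by move=> gf gg; apply: RintegralB => //; apply: good_int.
Qed.

Lemma Rint_sum (I : Type) (s : seq I) (F : I -> R -> R) :
  (forall i, good (F i)) ->
  \int[mu]_(t in `[0, 1]) (\sum_(i <- s) F i t) = \sum_(i <- s) \int[mu]_(t in `[0, 1]) F i t.
Proof.
move=> gF; elim: s => [|x s IH].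
  rewrite big_nil; under eq_Rintegral do rewrite big_nil.
  by rewrite Rintegral_cst // mul0r.
under eq_Rintegral do rewrite big_cons.
by rewrite RintD // ?IH ?big_cons //; apply: good_sum.
Qed.

Lemma Rint_sum_ord n (F : 'I_n -> R -> R) :
  (forall i, good (F i)) ->
  \int[mu]_(t in `[0, 1]) (\sum_(i < n) F i t) = \sum_(i < n) \int[mu]_(t in `[0, 1]) F i t.
Proof. exact: Rint_sum. Qed.

Lemma Rint_comb (k1 k2 k3 : R) f1 f2 f3 f4 : good f1 -> good f2 -> good f3 -> good f4 ->
  \int[mu]_(t in `[0, 1]) (k1 * (k2 * (f1 t - f2 t) - k3 * (f3 t - f4 t))) =
  k1 * (k2 * (\int[mu]_(t in `[0, 1]) f1 t - \int[mu]_(t in `[0, 1]) f2 t)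
      - k3 * (\int[mu]_(t in `[0, 1]) f3 t - \int[mu]_(t in `[0, 1]) f4 t)).
Proof.
move=> g1 g2 g3 g4.
have g12 := goodB g1 g2; have g34 := goodB g3 g4.
have h1 := goodZ (k:=k2) g12; have h2 := goodZ (k:=k3) g34.
rewrite (RintZ k1 (goodB h1 h2)) (RintB h1 h2) (RintZ k2 g12) (RintZ k3 g34).
by rewrite (RintB g1 g2) (RintB g3 g4).
Qed.

End S.

End M2.
Import M2.

Module M3.
Set Implicit Arguments.
Unset Strict Implicit.
Import Order.TTheory GRing.Theory Num.Theory.
Local Open Scope ring_scope.

Section S.
Variable R : realType.
Local Notation C := (R[i]).

Lemma cdiv_form (dx dy X Y : R) : (Complex dx dy / Complex X Y : C) =
  Complex ((dx * X + dy * Y) / (X ^+ 2 + Y ^+ 2)) ((dy * X - dx * Y) / (X ^+ 2 + Y ^+ 2)).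
Proof.
rewrite (_ : (Complex X Y)^-1 = Complex (X / (X ^+ 2 + Y ^+ 2)) (- (Y / (X ^+ 2 + Y ^+ 2)))) //.
rewrite (_ : forall a b c d : R, (Complex a b * Complex c d : C) = Complex (a * c - b * d) (a * d + b * c)) //.
by congr Complex; ring.
Qed.

Lemma cmxE n (M : 'M[R]_n) : cmx M = map_mx (real_complex R) M.
Proof. by []. Qed.

Lemma cmx_sum n (I : Type) (s : seq I) (F : I -> 'M[R]_n) :
  cmx (\sum_(i <- s) F i) = \sum_(i <- s) cmx (F i).
Proof.
apply/matrixP => k l; rewrite cmxE mxE !summxE rmorph_sum.
by apply: eq_bigr => i _; rewrite mxE.
Qed.

Lemma ortho_proj n (u : 'I_n -> 'cV[R]_n) :
  (forall i j, (u i)^T *m u j = (i == j)%:R%:M) ->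
  forall i j, (u i *m (u i)^T) *m (u j *m (u j)^T) = (i == j)%:R *: (u i *m (u i)^T).
Proof.
move=> hu i j.
rewrite mulmxA -(mulmxA (u i)) hu mul_mx_scalar -scalemxAl.
by case: eqP => [->|_]; rewrite ?scale1r // !scale0r.
Qed.

Lemma ortho_complete n (u : 'I_n -> 'cV[R]_n) :
  (forall i j, (u i)^T *m u j = (i == j)%:R%:M) ->
  \sum_(i < n) u i *m (u i)^T = 1%:M.
Proof.
move=> hu.
pose V : 'M[R]_n := \matrix_(k, i) u i k 0.
have h1 : V^T *m V = 1%:M.
  apply/matrixP => i j.
  transitivity (((u i)^T *m u j) 0 0); last by rewrite hu !mxE eqxx mulr1n.
  by rewrite !mxE; apply: eq_bigr => k _; rewrite !mxE.
have h2 := mulmx1C h1.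
apply/matrixP => k l; rewrite -h2 summxE !mxE.
by apply: eq_bigr => i _; rewrite !mxE big_ord1 !mxE.
Qed.

Lemma resolvent_spec n (M : 'M[R]_n) (l : 'I_n -> R) (u : 'I_n -> 'cV[R]_n) (z : C) :
  (forall i j, (u i)^T *m u j = (i == j)%:R%:M) ->
  M = \sum_(i < n) l i *: (u i *m (u i)^T) ->
  (forall i, (l i)%:C%C - z != 0) ->
  resolvent M z = \sum_(i < n) ((l i)%:C%C - z)^-1 *: cmx (u i *m (u i)^T).
Proof.
move=> hu hM hz.
set Q := fun i => cmx (u i *m (u i)^T).
have hQ : forall i j, Q i *m Q j = (i == j)%:R *: Q i.
  by move=> i j; rewrite /Q !cmxE -map_mxM ortho_proj // map_mxZ rmorph_nat.
have hS : \sum_i Q i = 1%:M by rewrite /Q -cmx_sum ortho_complete // cmxE map_mx1.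
have hA : cmx M - z%:M = \sum_i ((l i)%:C%C - z) *: Q i.
  have -> : z%:M = \sum_i z *: Q i by rewrite -scaler_sumr hS scalemx1.
  rewrite hM cmx_sum -sumrB; apply: eq_bigr => i _; rewrite scalerBl.
  by rewrite /Q cmxE map_mxZ.
set B := \sum_i ((l i)%:C%C - z)^-1 *: Q i.
have hAB : (cmx M - z%:M) *m B = 1%:M.
  rewrite hA /B mulmx_suml -hS; apply: eq_bigr => i _.
  rewrite mulmx_sumr (bigD1 i) //= big1 ?addr0.
    by rewrite -scalemxAl -scalemxAr hQ eqxx scale1r scalerA mulfV // scale1r.
  move=> j ji; rewrite -scalemxAl -scalemxAr hQ eq_sym (negbTE ji).
  by rewrite scale0r !scaler0.
rewrite /resolvent; have [uA uB] := mulmx1_unit hAB.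
by rewrite -[invmx _]mulmx1 -hAB mulmxA mulVmx // mul1mx.
Qed.

Notation mu := (@lebesgue_measure R).

Lemma cplxD (a b c d : R) : (Complex a b + Complex c d : C) = Complex (a + c) (b + d).
Proof. by []. Qed.
Lemma cplxN (a b : R) : (- Complex a b : C) = Complex (- a) (- b).
Proof. by []. Qed.
Lemma cplxM (a b c d : R) : (Complex a b * Complex c d : C) = Complex (a * c - b * d) (a * d + b * c).
Proof. by []. Qed.
Lemma cplx_eta (x : C) : x = Complex (complex.Re x) (complex.Im x).
Proof. by case: x. Qed.

Definition zt (a b : C) (t : R) : C := a + Complex t 0 * (b - a).
Definition FRE (p a b : C) :=
  fre (complex.Re (p - a)) (complex.Re (b - a)) (complex.Im (p - a)) (complex.Im (b - a)).
Definition FIM (p a b : C) :=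
  fim (complex.Re (p - a)) (complex.Re (b - a)) (complex.Im (p - a)) (complex.Im (b - a)).
Definition Ire (p a b : C) := \int[mu]_(t in `[0, 1]) FRE p a b t.
Definition Iim (p a b : C) := \int[mu]_(t in `[0, 1]) FIM p a b t.

Lemma pz_form p a b t : p - zt a b t =
  Complex (complex.Re (p - a) - t * complex.Re (b - a)) (complex.Im (p - a) - t * complex.Im (b - a)).
Proof.
case: p => p1 p2; case: a => a1 a2; case: b => b1 b2.
rewrite /zt !cplxN !cplxD ?cplxM /=.
by congr Complex; ring.
Qed.

Lemma h_form p a b t : (b - a) / (p - zt a b t) =
  Complex (fre (complex.Re (p - a)) (complex.Re (b - a)) (complex.Im (p - a)) (complex.Im (b - a)) t)
          (fim (complex.Re (p - a)) (complex.Re (b - a)) (complex.Im (p - a)) (complex.Im (b - a)) t).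
Proof. by rewrite pz_form {1}[b - a]cplx_eta cdiv_form. Qed.

Lemma N_ne0 p a b t : p - zt a b t != 0 ->
  Nf (complex.Re (p - a)) (complex.Re (b - a)) (complex.Im (p - a)) (complex.Im (b - a)) t != 0.
Proof.
rewrite pz_form /Nf; apply: contra => /eqP.
move/eqP; rewrite paddr_eq0 ?sqr_ge0 // !sqrf_eq0 => /andP[/eqP -> /eqP ->].
by [].
Qed.

Lemma good_fre p a b : (forall t : R, 0 <= t <= 1 -> p - zt a b t != 0) ->
  good (fre (complex.Re (p - a)) (complex.Re (b - a)) (complex.Im (p - a)) (complex.Im (b - a))).
Proof. by move=> h t /h /N_ne0; apply: derivable_fre. Qed.

Lemma good_fim p a b : (forall t : R, 0 <= t <= 1 -> p - zt a b t != 0) ->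
  good (fim (complex.Re (p - a)) (complex.Re (b - a)) (complex.Im (p - a)) (complex.Im (b - a))).
Proof. by move=> h t /h /N_ne0; apply: derivable_fim. Qed.

Definition qpole (m eta : R) : C := Complex m (- eta).
Definition cpf (l m eta : R) : C := (qpole m eta - (l%:C)%C)^-1.
Definition Kmx n (v w : 'I_n -> 'cV[R]_n) (i j : 'I_n) : 'M[R]_n :=
  v i *m (v i)^T *m onesmx R n *m w j *m (w j)^T.

Lemma shift_q (m eta : R) (z : C) : (m%:C)%C - (z + Complex 0 eta) = qpole m eta - z.
Proof. by case: z => z1 z2; rewrite /qpole !cplxN !cplxD /=; congr Complex; ring. Qed.

Lemma entry_formula n (A B : 'M[R]_n) (lam mu : 'I_n -> R) (v w : 'I_n -> 'cV[R]_n)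
  (eta : R) (z : C) r c :
  (forall i j, (v i)^T *m v j = (i == j)%:R%:M) ->
  (forall i j, (w i)^T *m w j = (i == j)%:R%:M) ->
  A = \sum_(i < n) lam i *: (v i *m (v i)^T) ->
  B = \sum_(j < n) mu j *: (w j *m (w j)^T) ->
  (forall i, (lam i)%:C%C - z != 0) ->
  (forall j, qpole (mu j) eta - z != 0) ->
  (resolvent A z *m cmx (onesmx R n) *m resolvent B (z + Complex 0 eta)) r c =
  \sum_(i < n) \sum_(j < n)
     (((lam i)%:C%C - z)^-1 * (qpole (mu j) eta - z)^-1) * ((Kmx v w i j r c)%:C)%C.
Proof.
move=> hv hw hA hB hz1 hz2.
have hz2' : forall j, (mu j)%:C%C - (z + Complex 0 eta) != 0 by move=> j; rewrite shift_q.
rewrite (resolvent_spec hv hA hz1) (resolvent_spec hw hB hz2').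
rewrite !mulmx_suml summxE; apply: eq_bigr => i _.
set P := cmx _; set J := cmx _.
have -> : ((lam i)%:C%C - z)^-1 *: P *m J *m
    (\sum_(j < n) ((mu j)%:C%C - (z + Complex 0 eta))^-1 *: cmx (w j *m (w j)^T)) =
  \sum_(j < n) ((((lam i)%:C%C - z)^-1 * (qpole (mu j) eta - z)^-1) *: cmx (Kmx v w i j)).
  rewrite mulmx_sumr; apply: eq_bigr => j _.
  rewrite -!scalemxAl -scalemxAr scalerA shift_q; congr (_ *: _).
  by rewrite /P /J /Kmx !cmxE -!map_mxM !mulmxA.
rewrite summxE; apply: eq_bigr => j _.
by rewrite mxE /Kmx cmxE mxE.
Qed.

Lemma qpole_ne (l m eta : R) : eta != 0 -> qpole m eta - (l%:C)%C != 0.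
Proof.
move=> e0; apply/negP => /eqP H.
have := congr1 (@complex.Im R) H; rewrite /qpole !cplxN !cplxD /= => /eqP.
by rewrite oppr0 addr0 oppr_eq0 (negbTE e0).
Qed.

Lemma term_re (l m eta : R) (a b : C) (t K : R) :
  (l%:C)%C - zt a b t != 0 -> qpole m eta - zt a b t != 0 -> eta != 0 ->
  complex.Re ((((l%:C)%C - zt a b t)^-1 * (qpole m eta - zt a b t)^-1) * (K%:C)%C * (b - a)) =
  K * (complex.Re (cpf l m eta) * (FRE (l%:C)%C a b t - FRE (qpole m eta) a b t)
       - complex.Im (cpf l m eta) * (FIM (l%:C)%C a b t - FIM (qpole m eta) a b t)).
Proof.
move=> h1 h2 e0.
have h3 := qpole_ne l m e0.
have -> : (((l%:C)%C - zt a b t)^-1 * (qpole m eta - zt a b t)^-1) * (K%:C)%C * (b - a) =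
   (K%:C)%C * cpf l m eta * ((b - a) / ((l%:C)%C - zt a b t) - (b - a) / (qpole m eta - zt a b t)).
  rewrite /cpf.
  have -> : qpole m eta - (l%:C)%C = (qpole m eta - zt a b t) - ((l%:C)%C - zt a b t) by ring.
  field.
  apply/and3P; split => //; apply: contra h3 => /eqP H; apply/eqP; rewrite -H; ring.
rewrite (h_form (l%:C)%C a b t) (h_form (qpole m eta) a b t) [cpf l m eta]cplx_eta !cplxN !cplxD !cplxM /=.
rewrite /FRE /FIM; ring.
Qed.

Lemma ReC (x y : R) : complex.Re (Complex x y) = x.
Proof. by []. Qed.

Lemma side_entry n (A B : 'M[R]_n) (lam mm : 'I_n -> R) (v w : 'I_n -> 'cV[R]_n)
  (eta : R) (a b : C) r c :
  (forall i j, (v i)^T *m v j = (i == j)%:R%:M) ->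
  (forall i j, (w i)^T *m w j = (i == j)%:R%:M) ->
  A = \sum_(i < n) lam i *: (v i *m (v i)^T) ->
  B = \sum_(j < n) mm j *: (w j *m (w j)^T) ->
  eta != 0 ->
  (forall t : R, 0 <= t <= 1 -> forall i, (lam i)%:C%C - zt a b t != 0) ->
  (forall t : R, 0 <= t <= 1 -> forall j, qpole (mm j) eta - zt a b t != 0) ->
  complex.Re ((seg_integral (fun z => resolvent A z *m cmx (onesmx R n)
                       *m resolvent B (z + Complex 0 eta)) a b) r c) =
  \sum_(i < n) \sum_(j < n) Kmx v w i j r c *
    (complex.Re (cpf (lam i) (mm j) eta) * (Ire ((lam i)%:C)%C a b - Ire (qpole (mm j) eta) a b)
     - complex.Im (cpf (lam i) (mm j) eta) * (Iim ((lam i)%:C)%C a b - Iim (qpole (mm j) eta) a b)).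
Proof.
move=> hv hw hA hB e0 hz1 hz2.
rewrite /seg_integral mxE /cintegral01 ReC.
rewrite (@eq_Rintegral _ _ _ (@lebesgue_measure R) _ (fun t => \sum_(i < n) \sum_(j < n) Kmx v w i j r c *
    (complex.Re (cpf (lam i) (mm j) eta) * (FRE ((lam i)%:C)%C a b t - FRE (qpole (mm j) eta) a b t)
     - complex.Im (cpf (lam i) (mm j) eta) * (FIM ((lam i)%:C)%C a b t - FIM (qpole (mm j) eta) a b t)))).
  have g1 : forall i, good (FRE ((lam i)%:C)%C a b) by move=> i; apply: good_fre => t ht; exact: hz1.
  have g2 : forall j, good (FRE (qpole (mm j) eta) a b) by move=> j; apply: good_fre => t ht; exact: hz2.
  have g3 : forall i, good (FIM ((lam i)%:C)%C a b) by move=> i; apply: good_fim => t ht; exact: hz1.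
  have g4 : forall j, good (FIM (qpole (mm j) eta) a b) by move=> j; apply: good_fim => t ht; exact: hz2.
  have gt : forall i j, good (fun t => Kmx v w i j r c *
    (complex.Re (cpf (lam i) (mm j) eta) * (FRE ((lam i)%:C)%C a b t - FRE (qpole (mm j) eta) a b t)
     - complex.Im (cpf (lam i) (mm j) eta) * (FIM ((lam i)%:C)%C a b t - FIM (qpole (mm j) eta) a b t))).
    by move=> i j; apply: goodZ; apply: goodB; apply: goodZ; apply: goodB.
  rewrite (@Rint_sum_ord _ n (fun i t => \sum_(j < n) Kmx v w i j r c *
    (complex.Re (cpf (lam i) (mm j) eta) * (FRE ((lam i)%:C)%C a b t - FRE (qpole (mm j) eta) a b t)
     - complex.Im (cpf (lam i) (mm j) eta) * (FIM ((lam i)%:C)%C a b t - FIM (qpole (mm j) eta) a b t)))); last first.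
    by move=> i; apply: good_sum.
  apply: eq_bigr => i _.
  rewrite (@Rint_sum_ord _ n (fun j t => Kmx v w i j r c *
    (complex.Re (cpf (lam i) (mm j) eta) * (FRE ((lam i)%:C)%C a b t - FRE (qpole (mm j) eta) a b t)
     - complex.Im (cpf (lam i) (mm j) eta) * (FIM ((lam i)%:C)%C a b t - FIM (qpole (mm j) eta) a b t)))) //.
  apply: eq_bigr => j _.
  by rewrite Rint_comb.
move=> t ht; have {ht} ht : 0 <= t <= 1 by move: ht; rewrite inE /= in_itv.
have -> : a + Complex t 0 * (b - a) = zt a b t by [].
rewrite (entry_formula _ _ hv hw hA hB (hz1 t ht) (hz2 t ht)).
rewrite mulr_suml raddf_sum; apply: eq_bigr => i _.
rewrite mulr_suml raddf_sum; apply: eq_bigr => j _.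
exact: (@term_re (lam i) (mm j) eta a b t (Kmx v w i j r c) (hz1 t ht i) (hz2 t ht j) e0).
Qed.

End S.

End M3.
Import M3.

Module M4.
Set Implicit Arguments.
Unset Strict Implicit.
Import Order.TTheory GRing.Theory Num.Theory.
Local Open Scope ring_scope.

Section S.
Variable R : realType.
Local Notation C := (R[i]).

Definition nrm2 (u : C) := complex.Re u ^+ 2 + complex.Im u ^+ 2.

Lemma ReB3 (p a b : C) : complex.Re (p - a) - complex.Re (b - a) = complex.Re (p - b).
Proof. by case: p => ? ?; case: a => ? ?; case: b => ? ? /=; ring. Qed.
Lemma ImB3 (p a b : C) : complex.Im (p - a) - complex.Im (b - a) = complex.Im (p - b).
Proof. by case: p => ? ?; case: a => ? ?; case: b => ? ? /=; ring. Qed.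

Lemma Ire_val (p a b : C) : (forall t : R, 0 <= t <= 1 -> p - zt a b t != 0) ->
  Ire p a b = (ln (nrm2 (p - a)) - ln (nrm2 (p - b))) / 2.
Proof.
move=> h; rewrite /Ire /FRE int_fre.
  by rewrite /Nf !mul0r !mul1r !subr0 ReB3 ImB3.
move=> t /h /N_ne0 N0; by rewrite lt_def N0 /Nf /= addr_ge0 ?sqr_ge0.
Qed.

Lemma Iim_valY (p a b : C) :
  (forall t : R, 0 <= t <= 1 -> complex.Im (p - a) - t * complex.Im (b - a) != 0) ->
  Iim p a b = atan (complex.Re (p - b) / complex.Im (p - b))
            - atan (complex.Re (p - a) / complex.Im (p - a)).
Proof. by move=> h; rewrite /Iim /FIM int_fim_Y // ReB3 ImB3. Qed.

Lemma Iim_valX (p a b : C) :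
  (forall t : R, 0 <= t <= 1 -> complex.Re (p - a) - t * complex.Re (b - a) != 0) ->
  Iim p a b = - (atan (complex.Im (p - b) / complex.Re (p - b))
            - atan (complex.Im (p - a) / complex.Re (p - a))).
Proof. by move=> h; rewrite /Iim /FIM int_fim_X // ReB3 ImB3. Qed.

Lemma ne0_X (p a b : C) t : complex.Re (p - a) - t * complex.Re (b - a) != 0 -> p - zt a b t != 0.
Proof. by rewrite pz_form; apply: contra => /eqP [-> _]. Qed.
Lemma ne0_Y (p a b : C) t : complex.Im (p - a) - t * complex.Im (b - a) != 0 -> p - zt a b t != 0.
Proof. by rewrite pz_form; apply: contra => /eqP [_ ->]. Qed.

Definition V1 (e : R) : C := Complex 3 (- e).
Definition V2 (e : R) : C := Complex 3 e.
Definition V3 (e : R) : C := Complex (- (3 : R)) e.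
Definition V4 (e : R) : C := Complex (- (3 : R)) (- e).

Lemma lam_sides (l e : R) : -3 < l < 3 -> 0 < e ->
  [/\ forall t : R, 0 <= t <= 1 -> complex.Re ((l%:C)%C - V1 e) - t * complex.Re (V2 e - V1 e) != 0,
      forall t : R, 0 <= t <= 1 -> complex.Im ((l%:C)%C - V2 e) - t * complex.Im (V3 e - V2 e) != 0,
      forall t : R, 0 <= t <= 1 -> complex.Re ((l%:C)%C - V3 e) - t * complex.Re (V4 e - V3 e) != 0 &
      forall t : R, 0 <= t <= 1 -> complex.Im ((l%:C)%C - V4 e) - t * complex.Im (V1 e - V4 e) != 0].
Proof.
move=> /andP[l1 l2] e0; split=> t /andP[t0 t1] /=; apply/eqP => H; nra.
Qed.

Lemma q_sides (m eta e : R) : 0 < e -> eta = 2 * e ->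
  [/\ forall t : R, 0 <= t <= 1 -> complex.Im (qpole m eta - V1 e) - t * complex.Im (V2 e - V1 e) != 0,
      forall t : R, 0 <= t <= 1 -> complex.Im (qpole m eta - V2 e) - t * complex.Im (V3 e - V2 e) != 0,
      forall t : R, 0 <= t <= 1 -> complex.Im (qpole m eta - V3 e) - t * complex.Im (V4 e - V3 e) != 0 &
      forall t : R, 0 <= t <= 1 -> complex.Im (qpole m eta - V4 e) - t * complex.Im (V1 e - V4 e) != 0].
Proof.
move=> e0 ->; split=> t /andP[t0 t1] /=; apply/eqP => H; nra.
Qed.

Lemma Tre_lam (l e : R) : -3 < l < 3 -> 0 < e ->
  Ire (l%:C)%C (V1 e) (V2 e) + Ire (l%:C)%C (V2 e) (V3 e) + Ire (l%:C)%C (V3 e) (V4 e)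
  + Ire (l%:C)%C (V4 e) (V1 e) = 0.
Proof.
move=> hl e0; have [h1 h2 h3 h4] := lam_sides hl e0.
rewrite (Ire_val (fun t ht => ne0_X (h1 t ht))) (Ire_val (fun t ht => ne0_Y (h2 t ht))).
rewrite (Ire_val (fun t ht => ne0_X (h3 t ht))) (Ire_val (fun t ht => ne0_Y (h4 t ht))).
by ring.
Qed.

Lemma Tre_q (m eta e : R) : 0 < e -> eta = 2 * e ->
  Ire (qpole m eta) (V1 e) (V2 e) + Ire (qpole m eta) (V2 e) (V3 e) + Ire (qpole m eta) (V3 e) (V4 e)
  + Ire (qpole m eta) (V4 e) (V1 e) = 0.
Proof.
move=> e0 he; have [h1 h2 h3 h4] := q_sides m e0 he.
rewrite (Ire_val (fun t ht => ne0_Y (h1 t ht))) (Ire_val (fun t ht => ne0_Y (h2 t ht))).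
rewrite (Ire_val (fun t ht => ne0_Y (h3 t ht))) (Ire_val (fun t ht => ne0_Y (h4 t ht))).
by ring.
Qed.

Lemma Tim_q (m eta e : R) : 0 < e -> eta = 2 * e ->
  Iim (qpole m eta) (V1 e) (V2 e) + Iim (qpole m eta) (V2 e) (V3 e) + Iim (qpole m eta) (V3 e) (V4 e)
  + Iim (qpole m eta) (V4 e) (V1 e) = 0.
Proof.
move=> e0 he; have [h1 h2 h3 h4] := q_sides m e0 he.
rewrite (Iim_valY h1) (Iim_valY h2) (Iim_valY h3) (Iim_valY h4).
by ring.
Qed.

Lemma Tim_lam (l e : R) : -3 < l < 3 -> 0 < e ->
  Iim (l%:C)%C (V1 e) (V2 e) + Iim (l%:C)%C (V2 e) (V3 e) + Iim (l%:C)%C (V3 e) (V4 e)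
  + Iim (l%:C)%C (V4 e) (V1 e) = - (2 * pi).
Proof.
move=> hl e0; have [h1 h2 h3 h4] := lam_sides hl e0.
rewrite (Iim_valX h1) (Iim_valY h2) (Iim_valX h3) (Iim_valY h4) /=.
have E : 2 * e / 2 = e by field.
have := lam_total hl (e := 2 * e); rewrite E => H.
rewrite !sub0r !opprK; apply: H.
by rewrite mulr_gt0.
Qed.

End S.

End M4.
Import M4.

Module M5.
Set Implicit Arguments.
Unset Strict Implicit.
Import Order.TTheory GRing.Theory Num.Theory.
Local Open Scope ring_scope.
Local Open Scope classical_set_scope.

Section S.
Variable R : realType.

Lemma spnorm_ub n (A : 'M[R]_n) :
  has_ubound [set vnorm2 (A *m x) | x in [set x : 'cV[R]_n | vnorm2 x = 1]].
Proof.
exists (Num.sqrt (\sum_(k < n) (\sum_(l < n) `|A k l|) ^+ 2)).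
move=> _ [x hx <-]; rewrite /vnorm2 ler_sqrt; last by apply: sumr_ge0 => k _; apply: sqr_ge0.
apply: ler_sum => k _.
have s0 : 0 <= \sum_(k < n) x k 0 ^+ 2 by apply: sumr_ge0 => ? _; apply: sqr_ge0.
have hs : \sum_(k < n) x k 0 ^+ 2 = 1.
  by have := sqr_sqrtr s0; rewrite /vnorm2 in hx; rewrite hx expr1n.
have xb : forall l, `|x l 0| <= 1.
  move=> l; have : x l 0 ^+ 2 <= 1.
    rewrite -hs (bigD1 l) //= lerDl; apply: sumr_ge0 => ? _; apply: sqr_ge0.
  by move=> h; rewrite ler_norml; apply/andP; split; nra.
have hb : `|(A *m x) k 0| <= \sum_(l < n) `|A k l|.
  rewrite mxE; apply: le_trans (ler_norm_sum _ _ _) _.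
  apply: ler_sum => l _; rewrite normrM; rewrite -[leRHS]mulr1.
  by apply: ler_wpM2l => //; apply: normr_ge0.
move: hb; rewrite ler_norml => /andP[h1 h2].
have S0 : 0 <= \sum_(l < n) `|A k l| by apply: sumr_ge0 => ? _; apply: normr_ge0.
nra.
Qed.

Lemma lam_bound n (A : 'M[R]_n) (lam : 'I_n -> R) (v : 'I_n -> 'cV[R]_n) i :
  (forall i j, (v i)^T *m v j = (i == j)%:R%:M) ->
  A = \sum_(i < n) lam i *: (v i *m (v i)^T) ->
  `|lam i| <= spnorm A.
Proof.
move=> hv hA.
have Av : A *m v i = lam i *: v i.
  rewrite hA mulmx_suml (bigD1 i) //= big1 ?addr0.
    by rewrite -scalemxAl -mulmxA hv eqxx mul_mx_scalar scale1r.
  move=> k ki; rewrite -scalemxAl -mulmxA hv (negbTE ki) mul_mx_scalar.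
  by rewrite scale0r scaler0.
have hs : \sum_(k < n) v i k 0 ^+ 2 = 1.
  transitivity (((v i)^T *m v i) 0 0); last by rewrite hv !mxE eqxx mulr1n.
  by rewrite !mxE; apply: eq_bigr => k _; rewrite !mxE expr2.
have -> : `|lam i| = vnorm2 (A *m v i).
  rewrite Av /vnorm2.
  under eq_bigr do rewrite mxE exprMn.
  by rewrite -mulr_sumr hs mulr1 sqrtr_sqr.
apply: ub_le_sup; first exact: spnorm_ub.
by exists (v i) => //=; rewrite /vnorm2 hs sqrtr1.
Qed.

End S.

End M5.
Import M5.

Unset Implicit Arguments.
Set Strict Implicit.
Import Order.TTheory GRing.Theory Num.Theory.
Local Open Scope ring_scope.

Lemma combine (R : realType) (K Rc Ic a1 a2 a3 a4 b1 b2 b3 b4 c1 c2 c3 c4 d1 d2 d3 d4 : R) :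
  a1 + a2 + a3 + a4 = 0 -> b1 + b2 + b3 + b4 = 0 ->
  c1 + c2 + c3 + c4 = - (2 * pi) -> d1 + d2 + d3 + d4 = 0 ->
  K * (Rc * (a1 - b1) - Ic * (c1 - d1)) + K * (Rc * (a2 - b2) - Ic * (c2 - d2))
  + K * (Rc * (a3 - b3) - Ic * (c3 - d3)) + K * (Rc * (a4 - b4) - Ic * (c4 - d4))
  = 2 * pi * K * Ic.
Proof.
move=> ha hb hc hd.
have -> : K * (Rc * (a1 - b1) - Ic * (c1 - d1)) + K * (Rc * (a2 - b2) - Ic * (c2 - d2))
  + K * (Rc * (a3 - b3) - Ic * (c3 - d3)) + K * (Rc * (a4 - b4) - Ic * (c4 - d4))
  = K * (Rc * ((a1 + a2 + a3 + a4) - (b1 + b2 + b3 + b4))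
         - Ic * ((c1 + c2 + c3 + c4) - (d1 + d2 + d3 + d4))) by ring.
by rewrite ha hb hc hd; ring.
Qed.

Theorem proposition3p2 (R : realType) (n : nat) (A B : 'M[R]_n)
  (lam mu : 'I_n -> R) (v w : 'I_n -> 'cV[R]_n) (eta : R) :
  A^T = A -> B^T = B ->
  (forall i j, (v i)^T *m v j = (i == j)%:R%:M) ->
  (forall i j, (w i)^T *m w j = (i == j)%:R%:M) ->
  A = \sum_(i < n) lam i *: (v i *m (v i)^T) ->
  B = \sum_(j < n) mu j *: (w j *m (w j)^T) ->
  spnorm A <= 5 / 2 ->
  0 < eta ->
  \sum_(i < n) \sum_(j < n)
     (eta / ((lam i - mu j) ^+ 2 + eta ^+ 2)) *:
       (v i *m (v i)^T *m onesmx R n *m w j *m (w j)^T)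
  = (2 * pi)^-1 *:
      map_mx (@complex.Re R)
        (rect_integral
           (fun z => resolvent A z *m cmx (onesmx R n)
                       *m resolvent B (z + Complex 0 eta))
           3 (eta / 2)).
Proof.
move=> hAt hBt hv hw hA hB hn e0.
have hl : forall i, -3 < lam i < 3.
  move=> i; have := le_trans (lam_bound i hv hA) hn.
  by rewrite ler_norml => /andP[h1 h2]; apply/andP; split; lra.
have ne : eta != 0 by rewrite gt_eqF.
have e2 : 0 < eta / 2 by rewrite divr_gt0.
have he : eta = 2 * (eta / 2) by field.
apply/matrixP => r c.
rewrite /rect_integral; cbv zeta beta.
set F := fun z : R[i] => _.
have sideP : forall a b, (forall t : R, 0 <= t <= 1 -> forall i, (lam i)%:C%C - zt a b t != 0) ->
  (forall t : R, 0 <= t <= 1 -> forall j, qpole (mu j) eta - zt a b t != 0) ->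
  complex.Re ((seg_integral F a b) r c) = _ := fun a b h1 h2 => side_entry r c hv hw hA hB ne h1 h2.
have madd : forall M1 M2 M3 M4 : 'M[R[i]]_n, (M1 + M2 + M3 + M4) r c = M1 r c + M2 r c + M3 r c + M4 r c.
  by move=> *; rewrite !mxE.
have ReD : forall x y : R[i], complex.Re (x + y) = complex.Re x + complex.Re y.
  by move=> [? ?] [? ?].
rewrite mxE [X in _ * X]mxE madd !ReD.
have L := fun i => lam_sides (hl i) e2.
have Q := fun j => q_sides (mu j) e2 he.
rewrite (sideP (V1 (eta / 2)) (V2 (eta / 2))); first last.
- by move=> t ht j; have [h1 _ _ _] := Q j; apply: ne0_Y; apply: h1.
- by move=> t ht i; have [h1 _ _ _] := L i; apply: ne0_X; apply: h1.
rewrite (sideP (V2 (eta / 2)) (V3 (eta / 2))); first last.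
- by move=> t ht j; have [_ h1 _ _] := Q j; apply: ne0_Y; apply: h1.
- by move=> t ht i; have [_ h1 _ _] := L i; apply: ne0_Y; apply: h1.
rewrite (sideP (V3 (eta / 2)) (V4 (eta / 2))); first last.
- by move=> t ht j; have [_ _ h1 _] := Q j; apply: ne0_Y; apply: h1.
- by move=> t ht i; have [_ _ h1 _] := L i; apply: ne0_X; apply: h1.
rewrite (sideP (V4 (eta / 2)) (V1 (eta / 2))); first last.
- by move=> t ht j; have [_ _ _ h1] := Q j; apply: ne0_Y; apply: h1.
- by move=> t ht i; have [_ _ _ h1] := L i; apply: ne0_Y; apply: h1.
rewrite -!big_split /= summxE mulr_sumr; apply: eq_bigr => i _.
rewrite -!big_split /= summxE mulr_sumr; apply: eq_bigr => j _.
rewrite mxE combine; last first.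
- exact: Tim_q e2 he.
- exact: Tim_lam (hl i) e2.
- exact: Tre_q e2 he.
- exact: Tre_lam (hl i) e2.
have p0 : pi != 0 :> R by rewrite gt_eqF // pi_gt0.
have d1 := sum_sqr_posr (lam i - mu j) ne.
have d2 : 0 < (mu j - lam i) ^+ 2 + (- eta - 0) ^+ 2.
  by apply: sum_sqr_posr; rewrite subr0 oppr_eq0.
rewrite subr0 in d2; rewrite /Kmx subr0.
move: p0; set P := (pi : R); clearbody P => p0.
field.
by rewrite (gt_eqF d2) p0.
Qed.
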